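(* Let $\Omega$ be a finite set and let $p,q$ be probability distributions on $\Omega$. Let $X_1,X_2$ be drawn i.i.d. from $p$ and $\mathcal{S}=\{X_1,X_2\}$, and let $P^\star(\mathrm{acc})$ be the supremum of $\Pr(Z\in\mathcal{S})$ over all valid token-level selection rules with output $Z$. Then $P^\star(\mathrm{acc})=1$ if and only if $$\sum_{x\in\mathcal{A}}q(x)\ \ge\ \Big(\sum_{x\in\mathcal{A}}p(x)\Big)^2\qquad\text{for every subset }\mathcal{A}\subseteq\Omega.$$
   Context: A token-level selection rule is a conditional distribution $\mathcal{P}(\cdot\mid X_1,X_2)$ on $\Omega$; it is valid if its output $Z$ satisfies $\Pr(Z=z)=q(z)$ for all $z\in\Omega$, where $X_1,X_2$ are i.i.d. with law $p$. *)

(* Defs.v *)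
From HB Require Import structures.
From mathcomp Require Import all_boot all_order all_algebra.
From mathcomp Require Import classical_sets boolp reals.
Set Implicit Arguments. Unset Strict Implicit. Unset Printing Implicit Defensive.
Import Order.TTheory GRing.Theory Num.Theory.
Local Open Scope ring_scope.
Local Open Scope classical_set_scope.

Definition is_distr (R : realType) (Omega : finType) (p : Omega -> R) : Prop :=
  (forall x, 0 <= p x) /\ \sum_(x : Omega) p x = 1.

Definition selection_rule (R : realType) (Omega : finType)
    (P : Omega -> Omega -> Omega -> R) : Prop :=
  forall x1 x2, is_distr (P x1 x2).

Definition output_law (R : realType) (Omega : finType) (p : Omega -> R)
    (P : Omega -> Omega -> Omega -> R) (z : Omega) : R :=
  \sum_(x1 : Omega) \sum_(x2 : Omega) p x1 * p x2 * P x1 x2 z.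

Definition valid_rule (R : realType) (Omega : finType) (p q : Omega -> R)
    (P : Omega -> Omega -> Omega -> R) : Prop :=
  selection_rule P /\ forall z, output_law p P z = q z.

Definition acc_prob (R : realType) (Omega : finType) (p : Omega -> R)
    (P : Omega -> Omega -> Omega -> R) : R :=
  \sum_(x1 : Omega) \sum_(x2 : Omega)
     p x1 * p x2 * \sum_(z : Omega | (z == x1) || (z == x2)) P x1 x2 z.

Definition Pstar_acc (R : realType) (Omega : finType) (p q : Omega -> R) : R :=
  sup [set a | exists P, valid_rule p q P /\ a = acc_prob p P].

(* Main.v *)
Require Import Defs.
From HB Require Import structures.
From mathcomp Require Import all_boot all_order all_algebra.
From mathcomp Require Import classical_sets boolp reals.
From mathcomp Require Import lra.
Import Order.TTheory GRing.Theory Num.Theory.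
Local Open Scope ring_scope.

Set Implicit Arguments. Unset Strict Implicit. Unset Printing Implicit Defensive.
Section Flow.
Variables (R : realType).

Lemma sumUI (T : finType) (F : T -> R) (A B : {set T}) :
  \sum_(x in A :|: B) F x + \sum_(x in A :&: B) F x =
  \sum_(x in A) F x + \sum_(x in B) F x.
Proof.
rewrite [X in X + _ = _]big_mkcond [X in _ + X = _]big_mkcond.
rewrite [X in _ = X + _]big_mkcond [X in _ = _ + X]big_mkcond -!big_split /=.
apply: eq_bigr => x _; rewrite finset.in_setU finset.in_setI.
by case: (x \in A); case: (x \in B); rewrite /= ?addr0 ?add0r.
Qed.

Lemma sum_sub (T : finType) (F : T -> R) (A B : {set T}) :
  (forall x, 0 <= F x) -> A \subset B -> \sum_(x in A) F x <= \sum_(x in B) F x.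
Proof.
move=> F0 /fintype.subsetP AB; rewrite [X in X <= _]big_mkcond [X in _ <= X]big_mkcond /=.
apply: ler_sum => x _; case: (boolP (x \in A)) => xA; first by rewrite (AB _ xA).
by case: (x \in B).
Qed.

Lemma sum_ind1 (T : finType) (B : {set T}) (i : T) (t : R) :
  \sum_(x in B) (if x == i then t else 0) = if i \in B then t else 0.
Proof.
case: (boolP (i \in B)) => iB.
  rewrite (bigD1 i) //= eqxx big1 ?addr0 // => x /andP[_ /negbTE ->] //.
rewrite big1 // => x xB; case: eqP => // ei; by move: iB; rewrite -ei xB.
Qed.

Lemma sum_ind1T (T : finType) (i : T) (t : R) :
  \sum_x (if x == i then t else 0) = t.
Proof. rewrite (bigD1 i) //= eqxx big1 ?addr0 // => x /negbTE -> //. Qed.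

Variables (I J : finType).
Implicit Types (E : {set I * J}) (A B : {set I}).

Definition Nb E A : {set J} := [set y | [exists x in A, (x, y) \in E]].

Lemma NbP E A y : reflect (exists2 x, x \in A & (x, y) \in E) (y \in Nb E A).
Proof.
rewrite inE; apply: (iffP existsP) => [[x /andP[xA xE]]|[x xA xE]].
  by exists x.
by exists x; rewrite xA xE.
Qed.

Lemma Nb_sub E E' A B : E \subset E' -> A \subset B -> Nb E A \subset Nb E' B.
Proof.
move=> /fintype.subsetP EE /fintype.subsetP AB; apply/fintype.subsetP => y /NbP[x xA xE]; apply/NbP.
by exists x; [exact: AB | exact: EE].
Qed.

Lemma NbU E A B : Nb E (A :|: B) = Nb E A :|: Nb E B.
Proof.
apply/finset.setP => y; rewrite finset.in_setU; apply/NbP/orP => [[x]|[]/NbP[x xA xE]].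
  by rewrite inE => /orP[xA|xB] xE; [left|right]; apply/NbP; exists x.
  by exists x; rewrite // inE xA.
by exists x; rewrite // inE xA orbT.
Qed.

Definition hall E (d : I -> R) (s : J -> R) :=
  forall A, \sum_(x in A) d x <= \sum_(y in Nb E A) s y.

Definition flow_sol E (d : I -> R) (s : J -> R) (phi : I -> J -> R) :=
  [/\ forall x y, 0 <= phi x y, forall x y, (x, y) \notin E -> phi x y = 0,
     forall x, \sum_y phi x y = d x & forall y, \sum_x phi x y = s y].

Lemma flow_base E d s : E = finset.set0 -> (forall x, 0 <= d x) -> (forall y, 0 <= s y) ->
  \sum_x d x = \sum_y s y -> hall E d s -> exists phi, flow_sol E d s phi.
Proof.
move=> E0 d0 s0 ds H.
have N0 : Nb E finset.setT = finset.set0.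
  apply/finset.setP => y; rewrite finset.in_set0; apply/negP => /NbP[x _]; by rewrite E0 finset.in_set0.
have := H finset.setT; rewrite N0 big_set0.
have -> : \sum_(x in [set: I]) d x = \sum_x d x by apply: eq_bigl => x; rewrite inE.
move=> Hd.
have sd0 : \sum_x d x = 0 by apply/le_anti; rewrite Hd sumr_ge0.
have dz : forall x, d x = 0 by move=> x; move/psumr_eq0P: sd0; apply.
have sz : forall y, s y = 0.
  by move=> y; move: ds; rewrite sd0 => /esym /psumr_eq0P; apply.
exists (fun _ _ => 0); split => //.
  by move=> x; rewrite big1 // dz.
by move=> y; rewrite big1 // sz.
Qed.

Lemma flow_ex n : forall E d s, (#|E| <= n)%N ->
  (forall x, 0 <= d x) -> (forall y, 0 <= s y) ->
  \sum_x d x = \sum_y s y -> hall E d s -> exists phi, flow_sol E d s phi.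
Proof.
elim: n => [|n IH] E d s hE d0 s0 ds H.
  by apply: flow_base => //; apply/eqP; rewrite -cards_eq0 -leqn0.
case: (finset.set_0Vmem E) => [E0|[[i j] Hij]]; first exact: flow_base.
pose elig A := (i \notin A) && (j \in Nb E A).
pose c A := \sum_(y in Nb E A) s y - \sum_(x in A) d x.
pose t := \big[Order.min/Order.min (d i) (s j)]_(A | elig A) c A.
have tm : t <= Order.min (d i) (s j) by apply: bigmin_le_id.
rewrite le_min in tm; case/andP: tm => tdi tsj.
have tc : forall A, elig A -> t <= c A by move=> A eA; apply: bigmin_le_cond.
have t0 : 0 <= t.
  apply: le_bigmin; first by rewrite le_min d0 s0.
  by move=> A _; rewrite subr_ge0.
have tcases : t = d i \/ t = s j \/ exists2 A, elig A & t = c A.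
  apply: (big_ind (fun x => x = d i \/ x = s j \/ exists2 A, elig A & x = c A)).
  - by rewrite minEle; case: ifP; auto.
  - by move=> x y Hx Hy; rewrite minEle; case: ifP.
  - by move=> A eA; right; right; exists A.
pose E' := E :\ (i, j).
pose d' x := d x - (if x == i then t else 0).
pose s' y := s y - (if y == j then t else 0).
have hE' : (#|E'| <= n)%N.
  by move: hE; rewrite (cardsD1 (i, j) E) Hij add1n ltnS.
have d'0 : forall x, 0 <= d' x.
  by move=> x; rewrite /d'; case: eqP => [->|_]; rewrite ?subr_ge0 ?subr0.
have s'0 : forall y, 0 <= s' y.
  by move=> y; rewrite /s'; case: eqP => [->|_]; rewrite ?subr_ge0 ?subr0.
have sd' : forall B, \sum_(x in B) d' x = \sum_(x in B) d x - (if i \in B then t else 0).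
  by move=> B; rewrite /d' sumrB sum_ind1.
have ss' : forall N : {set J}, \sum_(y in N) s' y = \sum_(y in N) s y - (if j \in N then t else 0).
  by move=> N; rewrite /s' sumrB sum_ind1.
have ds' : \sum_x d' x = \sum_y s' y.
  by rewrite /d' /s' !sumrB !sum_ind1T ds.
have Nneq : forall B y, y != j -> (y \in Nb E' B) = (y \in Nb E B).
  move=> B y yj; apply/NbP/NbP => [[x xB]|[x xB xE]].
    by rewrite finset.in_setD1 => /andP[_ xE]; exists x.
  by exists x => //; rewrite finset.in_setD1 xE andbT xpair_eqE negb_and yj orbT.
have Nnoti : forall B, i \notin B -> Nb E' B = Nb E B.
  move=> B iB; apply/finset.setP => y; apply/NbP/NbP => [[x xB]|[x xB xE]].
    by rewrite finset.in_setD1 => /andP[_ xE]; exists x.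
  exists x => //; rewrite finset.in_setD1 xE andbT xpair_eqE.
  by apply/negP => /andP[/eqP ei _]; move: iB; rewrite -ei xB.
have Nsub : forall B, Nb E' B \subset Nb E B.
  by move=> B; apply: Nb_sub => //; apply: finset.subsetDl.
have H' : hall E' d' s'.
  move=> B; rewrite sd' ss'.
  case hjN: (j \in Nb E' B).
    have eqN : Nb E' B = Nb E B.
      apply/finset.setP => y; case: (eqVneq y j) => [->|yj]; last exact: Nneq.
      by rewrite hjN; symmetry; apply: (fintype.subsetP (Nsub B)).
    rewrite eqN; case hiB: (i \in B).
      by rewrite lerD2r.
    have := tc B; rewrite /elig hiB -eqN hjN /c eqN => /(_ isT); have := H B; lra.
  rewrite subr0; case hiB: (i \in B).
  - have sN : \sum_(y in Nb E B) s y = \sum_(y in Nb E' B) s y + s j.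
      have jN : j \in Nb E B by apply/NbP; exists i.
      rewrite (bigD1 j) //= addrC; congr (_ + _); apply: eq_bigl => y.
      case: (eqVneq y j) => [->|yj]; first by rewrite hjN andbF.
      by rewrite Nneq // andbT.
    case: tcases => [ti|[ti|[A eA ti]]].
    + have HB := H (B :\ i).
      have sub : Nb E (B :\ i) \subset Nb E' B.
        apply/fintype.subsetP => y /NbP[x]; rewrite finset.in_setD1 => /andP[xi xB] xE.
        apply/NbP; exists x => //; rewrite finset.in_setD1 xE andbT xpair_eqE.
        by rewrite (negbTE xi).
      have := sum_sub s0 sub.
      have : \sum_(x in B) d x = d i + \sum_(x in B :\ i) d x.
        rewrite (bigD1 i) //=; congr (_ + _); apply: eq_bigl => x.
        by rewrite finset.in_setD1 andbC.
      lra.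
    + have := H B; lra.
    + case/andP: eA => iA jA.
      have HU := H (A :|: B); have HI := H (A :&: B).
      have U := sumUI d A B.
      have eU : Nb E (A :|: B) = Nb E A :|: Nb E' B.
        rewrite NbU; apply/finset.setP => y; rewrite !finset.in_setU.
        case: (eqVneq y j) => [->|yj]; first by rewrite jA.
        by rewrite Nneq.
      have sI : Nb E (A :&: B) \subset Nb E A :&: Nb E' B.
        apply/fintype.subsetP => y /NbP[x]; rewrite finset.in_setI => /andP[xA xB] xE.
        rewrite finset.in_setI; apply/andP; split; apply/NbP; exists x => //.
        rewrite finset.in_setD1 xE andbT xpair_eqE.
        by apply/negP => /andP[/eqP ei _]; move: iA; rewrite -ei xA.
      have := sum_sub s0 sI.
      have := sumUI s (Nb E A) (Nb E' B).
      have := H A.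
      rewrite eU in HU; move: ti; rewrite /c; lra.
  - by rewrite subr0 Nnoti ?hiB //; exact: H.
have [phi [p0 pE pr pc]] := IH E' d' s' hE' d'0 s'0 ds' H'.
exists (fun x y => phi x y + (if (x == i) && (y == j) then t else 0)); split.
- by move=> x y; rewrite addr_ge0 //; case: ifP.
- move=> x y xE; rewrite pE ?add0r; last by rewrite finset.in_setD1 negb_and xE orbT.
  case: ifP => // /andP[/eqP ex /eqP ey]; by move: xE; rewrite ex ey Hij.
- move=> x; rewrite big_split /= pr /d'.
  case: (eqVneq x i) => [->|xi] /=.
    by rewrite ?eqxx /= sum_ind1T ?eqxx subrK.
  by rewrite big1 ?subr0 ?addr0.
- move=> y; rewrite big_split /= pc /s'.
  case: (eqVneq y j) => [->|yj] /=.
    rewrite (eq_bigr (fun x => if x == i then t else 0)); last by move=> x _; rewrite andbT.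
    by rewrite sum_ind1T ?eqxx subrK.
  by rewrite big1 ?subr0 ?addr0 // => x _; rewrite andbF.
Qed.

End Flow.
Lemma sum_le_pred (R : realType) (T : finType) (a b : pred T) (F : T -> R) :
  (forall x, 0 <= F x) -> (forall x, a x -> b x) ->
  \sum_(x | a x) F x <= \sum_(x | b x) F x.
Proof.
move=> F0 ab; rewrite [X in X <= _]big_mkcond [X in _ <= X]big_mkcond /=.
apply: ler_sum => x _; case: (boolP (a x)) => ax; first by rewrite (ab x ax).
by case: (b x).
Qed.

Section Main.
Variables (R : realType) (Omega : finType) (p q : Omega -> R).
Hypotheses (hp : is_distr p) (hq : is_distr q).

Lemma sum_pp : \sum_x1 \sum_x2 p x1 * p x2 = 1.
Proof.
transitivity ((\sum_x p x) * (\sum_x p x)); last by rewrite (proj2 hp) mulr1.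
rewrite mulr_suml; apply: eq_bigr => x _; by rewrite mulr_sumr.
Qed.

Lemma sq_sum (C : {set Omega}) : (\sum_(x in C) p x) ^+ 2 =
  \sum_x1 \sum_x2 (if (x1 \in C) && (x2 \in C) then p x1 * p x2 else 0).
Proof.
rewrite expr2 big_mkcond mulr_suml; apply: eq_bigr => x1 _.
rewrite big_mkcond mulr_sumr; apply: eq_bigr => x2 _.
by case: (x1 \in C); case: (x2 \in C); rewrite /= ?mulr0 ?mul0r.
Qed.

Lemma acct_le1 (P : Omega -> Omega -> Omega -> R) x1 x2 : selection_rule P ->
  \sum_(z | (z == x1) || (z == x2)) P x1 x2 z <= 1.
Proof.
move=> sel; have [P0 P1] := sel x1 x2; rewrite -P1.
by apply: sum_le_pred.
Qed.

Lemma acc_le1 (P : Omega -> Omega -> Omega -> R) : selection_rule P -> acc_prob p P <= 1.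
Proof.
move=> sel; rewrite -sum_pp /acc_prob; apply: ler_sum => x1 _; apply: ler_sum => x2 _.
rewrite -[X in _ <= X]mulr1; apply: ler_wpM2l; first by rewrite mulr_ge0 // (proj1 hp).
exact: acct_le1.
Qed.

Definition Sacc : set R := [set a | exists P, valid_rule p q P /\ a = acc_prob p P]%classic.

Lemma hasS : has_sup Sacc.
Proof.
split; last by exists 1 => a [P [[sel _] ->]]; exact: acc_le1.
exists (acc_prob p (fun _ _ z => q z)); exists (fun _ _ z => q z); split => //.
split; first by move=> x1 x2; exact: hq.
move=> z; rewrite /output_law.
transitivity ((\sum_x1 \sum_x2 p x1 * p x2) * q z); last by rewrite sum_pp mul1r.
rewrite mulr_suml; apply: eq_bigr => x1 _; by rewrite mulr_suml.
Qed.

Lemma dir1 : sup Sacc = 1 -> forall A : {set Omega},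
  (\sum_(x in A) p x) ^+ 2 <= \sum_(x in A) q x.
Proof.
move=> s1 A; apply/ler_addgt0Pr => e e0.
have [a [P [[sel outl] ->]] ha] := sup_adherent e0 hasS.
rewrite s1 in ha.
have qA : \sum_(z in A) q z =
    \sum_x1 \sum_x2 p x1 * p x2 * \sum_(z in A) P x1 x2 z.
  rewrite (eq_bigr (fun z => output_law p P z)); last by move=> z _; rewrite outl.
  rewrite /output_law exchange_big; apply: eq_bigr => x1 _.
  rewrite exchange_big; apply: eq_bigr => x2 _; by rewrite mulr_sumr.
have key : (\sum_(x in A) p x) ^+ 2 - \sum_(z in A) q z <= 1 - acc_prob p P.
  rewrite sq_sum qA -sum_pp /acc_prob -!sumrB; apply: ler_sum => x1 _.
  rewrite -!sumrB; apply: ler_sum => x2 _.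
  have pp0 : 0 <= p x1 * p x2 by rewrite mulr_ge0 // (proj1 hp).
  have [P0 P1] := sel x1 x2.
  have a1 := acct_le1 x1 x2 sel.
  have i0 : 0 <= \sum_(z in A) P x1 x2 z by rewrite sumr_ge0.
  have a0 : 0 <= \sum_(z | (z == x1) || (z == x2)) P x1 x2 z by rewrite sumr_ge0.
  case: ifP => [/andP[x1A x2A]|_].
    have : \sum_(z | (z == x1) || (z == x2)) P x1 x2 z <= \sum_(z in A) P x1 x2 z.
      apply: sum_le_pred => // z /orP[] /eqP ->; done.
    move=> h; have : p x1 * p x2 * \sum_(z | (z == x1) || (z == x2)) P x1 x2 z <= p x1 * p x2 * \sum_(z in A) P x1 x2 z by apply: ler_wpM2l.
    lra.
  have : 0 <= p x1 * p x2 * \sum_(z in A) P x1 x2 z by rewrite mulr_ge0.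
  have : p x1 * p x2 * \sum_(z | (z == x1) || (z == x2)) P x1 x2 z <= p x1 * p x2.
    by rewrite -[X in _ <= X]mulr1; apply: ler_wpM2l.
  lra.
lra.
Qed.

Lemma dir2 : (forall A : {set Omega},
  (\sum_(x in A) p x) ^+ 2 <= \sum_(x in A) q x) -> sup Sacc = 1.
Proof.
move=> H.
pose E := [set e : Omega * (Omega * Omega) | (e.1 == e.2.1) || (e.1 == e.2.2)].
pose s := fun xx : Omega * Omega => p xx.1 * p xx.2.
have s0 : forall xx, 0 <= s xx by move=> xx; rewrite mulr_ge0 // (proj1 hp).
have sE : \sum_xx s xx = 1 by rewrite -sum_pp pair_big.
have NbE : forall A xx, (xx \in Nb E A) = (xx.1 \in A) || (xx.2 \in A).
  move=> A [x1 x2] /=; apply/NbP/orP => [[z zA]|[]xA].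
    by rewrite inE /= => /orP[]/eqP <-; auto.
  by exists x1 => //; rewrite inE /= eqxx.
  by exists x2 => //; rewrite inE /= eqxx orbT.
have hall0 : hall E q s.
  move=> A.
  have HC := H (~: A).
  have q1 : \sum_(x in A) q x + \sum_(x in ~: A) q x = 1.
    rewrite -(proj2 hq) [in RHS](bigID (fun x => x \in A)) /=; congr (_ + _).
    by apply: eq_bigl => x; rewrite finset.in_setC.
  have s1 : \sum_(xx in Nb E A) s xx + (\sum_(x in ~: A) p x) ^+ 2 = 1.
    rewrite -sE [in RHS](bigID (fun xx => xx \in Nb E A)) /=; congr (_ + _).
    rewrite sq_sum pair_big [in RHS]big_mkcond /=. apply: eq_bigr => xx _.
    by rewrite NbE !finset.in_setC; case: (xx.1 \in A); case: (xx.2 \in A).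
  lra.
have [phi [p0 pE pr pc]] := flow_ex (leqnn #|E|) (proj1 hq) s0
   (etrans (proj2 hq) (esym sE)) hall0.
pose P := fun x1 x2 z => if p x1 * p x2 == 0 then (z == x1)%:R
                         else phi z (x1, x2) / (p x1 * p x2).
have phi0 : forall x1 x2 z, p x1 * p x2 = 0 -> phi z (x1, x2) = 0.
  move=> x1 x2 z pp0; have := pc (x1, x2); rewrite /s /= pp0.
  by move/psumr_eq0P => ->.
have sel : selection_rule P.
  move=> x1 x2; rewrite /P; case: eqP => pp0; split.
  - by move=> z; rewrite ler0n.
  - by rewrite (bigD1 x1) //= eqxx big1 ?addr0 // => z /negbTE ->.
  - by move=> z; rewrite divr_ge0 // mulr_ge0 // (proj1 hp).
  - by rewrite -mulr_suml (pc (x1, x2)) /s /= divff //; apply/eqP.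
have ppP : forall x1 x2 z, p x1 * p x2 * P x1 x2 z = phi z (x1, x2).
  move=> x1 x2 z; rewrite /P; case: eqP => pp0.
    by rewrite pp0 mul0r phi0.
  by rewrite mulrC divfK //; apply/eqP.
have valid : valid_rule p q P.
  split => // z; rewrite /output_law.
  rewrite (eq_bigr (fun x1 => \sum_x2 phi z (x1, x2))); last first.
    by move=> x1 _; apply: eq_bigr => x2 _; rewrite ppP.
  by rewrite pair_big /= -(pr z); apply: eq_bigr => -[].
have acc1 : acc_prob p P = 1.
  rewrite -sum_pp /acc_prob; apply: eq_bigr => x1 _; apply: eq_bigr => x2 _.
  case: (eqVneq (p x1 * p x2) 0) => pp0; first by rewrite pp0 mul0r.
  rewrite mulr_sumr (eq_bigr (fun z => phi z (x1, x2))); last by move=> z _; rewrite ppP.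
  rewrite -[RHS]mulr1 -(proj2 (sel x1 x2)) mulr_sumr.
  rewrite [in RHS](bigID (fun z => (z == x1) || (z == x2))) /=.
  rewrite [X in _ = _ + X]big1 ?addr0; last first.
    by move=> z zn; rewrite ppP pE // inE.
  by apply: eq_bigr => z _; rewrite ppP.
apply/le_anti/andP; split.
  by apply: ge_sup; [case: hasS | move=> a [P' [[sel' _] ->]]; exact: acc_le1].
by apply: (sup_upper_bound hasS); exists P.
Qed.

End Main.

Unset Implicit Arguments.

Theorem theorem2 (R : realType) (Omega : finType) (p q : Omega -> R) :
  is_distr p -> is_distr q ->
  (Pstar_acc p q = 1 <->
   forall A : {set Omega}, (\sum_(x in A) p x) ^+ 2 <= \sum_(x in A) q x).
Proof.
move=> hp hq; split.
  by move=> h; apply: (dir1 hp hq).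
by move=> h; exact: (dir2 hp hq h).
Qed.
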